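(* Let $\mathbf U$ be a group variety. Every finite connected directed graph $\Gamma$ which is minimal, in the minor ordering among finite connected directed graphs, with respect to not having property $\mathrm{P}(\mathbf U)$ (that is, $\Gamma$ does not have $\mathrm{P}(\mathbf U)$, and every connected minor $\Delta$ of $\Gamma$ that does not have $\mathrm{P}(\mathbf U)$ has $\Gamma$ as a minor) is two-edge-connected and has no loops.
   Context: All graphs are finite directed graphs, possibly with loops and multiple edges. A graph $\Gamma$ has vertex set $V(\Gamma)$ and edge set $E(\Gamma)$, and each edge $e$ has an initial vertex $\iota e$ and a terminal vertex $\tau e$; a loop is an edge with $\iota e=\tau e$. A subgraph is regarded as a set of vertices and edges (containing the endpoints of its edges); unions and intersections of subgraphs are taken as sets of vertices and edges. Connectedness and two-edge-connectedness refer to the underlying undirected multigraph (two-edge-connected: connected and remains connected after removing any one edge). Let $\overline{\Gamma}$ be the graph with vertex set $V(\Gamma)$ and edge set $E(\Gamma)\sqcup E(\Gamma)^{-1}$, where for $e\in E(\Gamma)$ the formal edge $e^{-1}$ goes from $\tau e$ to $\iota e$. A path $p$ in $\overline{\Gamma}$ is either an empty path at a vertex or a sequence $e_1\cdots e_n$ of edges of $\overline{\Gamma}$ with $\tau e_i=\iota e_{i+1}$; it has initial vertex $\iota p$ and terminal vertex $\tau p$, and is regarded as a word over the alphabet $E(\Gamma)\cup E(\Gamma)^{-1}$. The span $\langle p\rangle$ is the subgraph of $\Gamma$ consisting of the vertices traversed by $p$ and the edges $e\in E(\Gamma)$ such that $e$ or $e^{-1}$ occurs in $p$. For a group variety $\mathbf{U}$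 and words $u,v$ over $X\cup X^{-1}$, write $u\equiv_{\mathbf U} v$ if $u$ and $v$ represent the same element of the relatively free group of $\mathbf U$ on $X$ (i.e. the identity $u=v$ holds in $\mathbf U$), and $[u]_{\mathbf U}$ for the class of $u$. The free $g\mathbf U$-category on $\Gamma$ has vertex set $V(\Gamma)$; its arrows from $i$ to $j$ are the triples $(i,[p]_{\mathbf U},j)$ with $p$ an $(i,j)$-path in $\overline\Gamma$, and $(i,[p]_{\mathbf U},j)(j,[q]_{\mathbf U},k)=(i,[pq]_{\mathbf U},k)$; for an arrow $x=(i,[p]_{\mathbf U},j)$ put $\iota x=i$, $\tau x=j$. For each arrow $x$ define subgraphs of $\Gamma$: $C_0(x)=\bigcap\{\langle p\rangle : p \text{ a path in }\overline\Gamma \text{ with } (\iota p,[p]_{\mathbf U},\tau p)=x\}$; $P_n(x)$ is the connected component of $C_n(x)$ containing $\iota x$; $C_{n+1}(x)=\bigcap\{P_n(x_1)\cup\cdots\cup P_n(x_k) : k\ge 1,\ x_1,\dots,x_k \text{ arrows with } x_1\cdots x_k=x\}$; and $P(x)=\bigcap_{n\ge 0}P_n(x)$. A connected graph $\Gamma$ has property $\mathrm{P}(\mathbf U)$ if $\tau x\in P(x)$ for every arrow $x$ of the free $g\mathbf U$-category on $\Gamma$. A graph $\Delta$ is a minor of $\Gamma$ if $\Delta$ can be obtained from $\Gamma$ by a finite sequence of the following operations: contracting an edge $e$ with $\iota e\neq\tau e$ (removing $e$ and identifying its two endpoints into one vertex), deleting an edge, deleting a vertex together with its incident edges, and reversing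 the direction of an edge. *)

(* Defs.v *)
From Stdlib Require Import Relations.
From Stdlib Require List.
From mathcomp Require Import all_boot.

Set Implicit Arguments.
Unset Strict Implicit.
Unset Printing Implicit Defensive.

Record group := Group {
  gcar :> Type;
  gmul : gcar -> gcar -> gcar;
  ginv : gcar -> gcar;
  gone : gcar;
  gmulA : forall x y z, gmul x (gmul y z) = gmul (gmul x y) z;
  gmul1 : forall x, gmul gone x = x;
  gmulV : forall x, gmul (ginv x) x = gone
}.

(* A word over X \cup X^{-1}: a letter (x, true) is x, (x, false) is x^{-1}. *)
Definition word (X : Type) := seq (X * bool)%type.

Definition geval (X : Type) (G : group) (f : X -> G) (w : word X) : G :=
  foldr (fun a acc => gmul (if a.2 then f a.1 else ginv (f a.1)) acc) (gone G) w.

(* A group variety, given by a set of defining laws (identities) in the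
   countably many variables x_0, x_1, ... (Birkhoff). *)
Definition law := (word nat * word nat)%type.
Definition variety := law -> Prop.

Definition in_variety (U : variety) (G : group) : Prop :=
  forall l, U l -> forall f : nat -> G, geval f l.1 = geval f l.2.

(* u ==_U v : the identity u = v holds in U, i.e. u and v represent the same
   element of the relatively free group of U on X. *)
Definition wequiv (U : variety) (X : Type) (u v : word X) : Prop :=
  forall G : group, in_variety U G -> forall f : X -> G, geval f u = geval f v.

Record graph := Graph {
  gV : finType;
  gE : finType;
  gsrc : gE -> gV;
  gtgt : gE -> gV
}.

Section GraphNotions.
Variable g : graph.
Local Notation V := (gV g).
Local Notation E := (gE g).

Definition adj_in (P : pred E) : rel V :=
  fun x y => [exists e, P e &&
     (((gsrc e == x) && (gtgt e == y)) || ((gsrc e == y) && (gtgt e == x)))].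

Definition connected : Prop :=
  (0 < #|V|) /\ forall x y : V, connect (adj_in predT) x y.

Definition two_edge_connected : Prop :=
  connected /\ forall (e : E) (x y : V), connect (adj_in (predC1 e)) x y.

Definition loopless : Prop := forall e : E, gsrc e <> gtgt e.

Definition lsrc (a : E * bool) : V := if a.2 then gsrc a.1 else gtgt a.1.
Definition ltgt (a : E * bool) : V := if a.2 then gtgt a.1 else gsrc a.1.

Fixpoint is_path (i : V) (w : word E) (j : V) : Prop :=
  match w with
  | [::] => i = j
  | a :: w' => lsrc a = i /\ is_path (ltgt a) w' j
  end.

Definition subgraph := ((V -> Prop) * (E -> Prop))%type.

Definition span (i : V) (w : word E) : subgraph :=
  (fun v => v = i \/ exists a, List.In a w /\ (v = lsrc a \/ v = ltgt a),
   fun e => exists b, List.In (e, b) w).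

Definition reach (P : E -> Prop) : relation V :=
  clos_refl_trans V (fun x y => exists e, P e /\
     ((gsrc e = x /\ gtgt e = y) \/ (gsrc e = y /\ gtgt e = x))).

Definition component (C : subgraph) (i : V) : subgraph :=
  (fun v => C.1 i /\ reach C.2 i v,
   fun e => C.2 e /\ C.1 i /\ reach C.2 i (gsrc e)).

Variable U : variety.

(* An arrow of the free gU-category is (i, [w]_U, j) with w a path from i to
   j; we represent it by a triple (i, w, j).  Two triples give the same arrow
   iff they have equal endpoints and U-equivalent words. *)
Definition arrow := (V * word E * V)%type.

(* fs = [:: x_1; ...; x_k] (k >= 1) is a factorisation of the arrow (i,[w],j):
   the x_m are arrows, composable, and x_1 ... x_k = (i,[w],j). *)
Fixpoint chain (i : V) (fs : seq arrow) (j : V) : Prop :=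
  match fs with
  | [::] => i = j
  | x :: fs' => x.1.1 = i /\ is_path x.1.1 x.1.2 x.2 /\ chain x.2 fs' j
  end.

Definition factorisation (i : V) (w : word E) (j : V) (fs : seq arrow) : Prop :=
  fs <> [::] /\ chain i fs j /\ wequiv U (flatten (map (fun x => x.1.2) fs)) w.

Definition C0 (i : V) (w : word E) (j : V) : subgraph :=
  (fun v => forall w', is_path i w' j -> wequiv U w' w -> (span i w').1 v,
   fun e => forall w', is_path i w' j -> wequiv U w' w -> (span i w').2 e).

Fixpoint Cn (n : nat) (i : V) (w : word E) (j : V) : subgraph :=
  match n with
  | 0 => C0 i w j
  | n'.+1 =>
    (fun v => forall fs, factorisation i w j fs ->
        exists x, List.In x fs /\ (component (Cn n' x.1.1 x.1.2 x.2) x.1.1).1 v,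
     fun e => forall fs, factorisation i w j fs ->
        exists x, List.In x fs /\ (component (Cn n' x.1.1 x.1.2 x.2) x.1.1).2 e)
  end.

Definition Pn (n : nat) (i : V) (w : word E) (j : V) : subgraph :=
  component (Cn n i w j) i.

Definition Pinf (i : V) (w : word E) (j : V) : subgraph :=
  (fun v => forall n, (Pn n i w j).1 v, fun e => forall n, (Pn n i w j).2 e).

Definition propP : Prop :=
  forall (i j : V) (w : word E), is_path i w j -> (Pinf i w j).1 j.

End GraphNotions.

Definition iso_step (g D : graph) : Prop :=
  exists (phi : gV g -> gV D) (psi : gE D -> gE g),
    bijective phi /\ bijective psi /\
    forall d, phi (gsrc (psi d)) = gsrc d /\ phi (gtgt (psi d)) = gtgt d.

Definition del_edge_step (g D : graph) : Prop :=
  exists (e : gE g) (phi : gV g -> gV D) (psi : gE D -> gE g),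
    bijective phi /\ injective psi /\
    (forall d, psi d <> e) /\ (forall e', e' <> e -> exists d, psi d = e') /\
    forall d, phi (gsrc (psi d)) = gsrc d /\ phi (gtgt (psi d)) = gtgt d.

Definition del_vertex_step (g D : graph) : Prop :=
  exists (v : gV g) (phi : gV D -> gV g) (psi : gE D -> gE g),
    injective phi /\ (forall u, phi u <> v) /\
    (forall u, u <> v -> exists u', phi u' = u) /\
    injective psi /\
    (forall e, (exists d, psi d = e) <-> (gsrc e <> v /\ gtgt e <> v)) /\
    forall d, gsrc (psi d) = phi (gsrc d) /\ gtgt (psi d) = phi (gtgt d).

Definition reverse_step (g D : graph) : Prop :=
  exists (e : gE g) (phi : gV g -> gV D) (psi : gE D -> gE g),
    bijective phi /\ bijective psi /\
    forall d,
      (psi d <> e -> phi (gsrc (psi d)) = gsrc d /\ phi (gtgt (psi d)) = gtgt d) /\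
      (psi d = e -> phi (gtgt (psi d)) = gsrc d /\ phi (gsrc (psi d)) = gtgt d).

Definition contract_step (g D : graph) : Prop :=
  exists (e : gE g) (phi : gV g -> gV D) (psi : gE D -> gE g),
    gsrc e <> gtgt e /\
    (forall u, exists x, phi x = u) /\
    (forall x y, phi x = phi y <->
       (x = y \/ (x = gsrc e /\ y = gtgt e) \/ (x = gtgt e /\ y = gsrc e))) /\
    injective psi /\
    (forall d, psi d <> e) /\ (forall e', e' <> e -> exists d, psi d = e') /\
    forall d, phi (gsrc (psi d)) = gsrc d /\ phi (gtgt (psi d)) = gtgt d.

Definition minor_step (g D : graph) : Prop :=
  iso_step g D \/ del_edge_step g D \/ del_vertex_step g D \/
  reverse_step g D \/ contract_step g D.

Inductive is_minor : graph -> graph -> Prop :=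
  | minor_refl g : is_minor g g
  | minor_step_trans g g' D : minor_step g g' -> is_minor D g' -> is_minor D g.

(* Main.v *)
Require Import Defs.
From Stdlib Require Import Relations.
From Stdlib Require List.
From mathcomp Require Import all_boot.
Set Implicit Arguments. Unset Strict Implicit. Unset Printing Implicit Defensive.

Lemma gmulVr (G : group) (x : G) : gmul x (ginv x) = gone G.
Proof.
set y := ginv x.
have e1 : gmul (ginv y) y = gone G by apply: gmulV.
rewrite -[gmul x y]gmul1 -{1}e1 -gmulA (gmulA y x y) gmulV gmul1 //.
Qed.

Lemma gmulr1 (G : group) (x : G) : gmul x (gone G) = x.
Proof. by rewrite -(gmulV x) gmulA gmulVr gmul1. Qed.

Lemma ginv1 (G : group) : ginv (gone G) = gone G.
Proof. by rewrite -{1}(gmulr1 (ginv (gone G))) gmulV. Qed.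

Lemma geval_cat (X : Type) (G : group) (f : X -> G) u v :
  geval f (u ++ v) = gmul (geval f u) (geval f v).
Proof. elim: u => [|a u IH] /=; first by rewrite gmul1. by rewrite IH gmulA. Qed.

Lemma wequiv_refl U X (u : word X) : wequiv U u u.
Proof. by []. Qed.
Lemma wequiv_sym U X (u v : word X) : wequiv U u v -> wequiv U v u.
Proof. by move=> H G HG f; rewrite H. Qed.
Lemma wequiv_trans U X (u v w : word X) : wequiv U u v -> wequiv U v w -> wequiv U u w.
Proof. by move=> H1 H2 G HG f; rewrite H1 ?H2. Qed.

Lemma start_in (g : graph) U n (i : gV g) w j : (Cn U n i w j).1 i.
Proof.
elim: n i w j => [|n IH] i w j /=.
  by move=> w' _ _; left.
move=> [|x fs] [Hne [Hch _]] //.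
case: Hch => H1 _.
exists x; split; first by left.
split; first by rewrite H1; apply: IH.
by rewrite H1; apply: rt_refl.
Qed.

Lemma chain_path (g : graph) (s : gV g) fs t x :
  chain s fs t -> List.In x fs -> is_path x.1.1 x.1.2 x.2.
Proof.
elim: fs s => [|y fs IH] s //= [H1 [H2 H3]] [<-|Hin] //.
exact: IH H3 Hin.
Qed.

Section Main.
Variables (g D : graph) (U : variety) (b : gE g).
Variables (phi : gV g -> gV D) (psi : gE D -> gE g) (side : gV g -> bool).
Hypothesis Hpsi_inj : injective psi.
Hypothesis Hpsi_b : forall d, psi d <> b.
Hypothesis Hpsi_sur : forall e, e <> b -> exists d, psi d = e.
Hypothesis Hsrc : forall d, phi (gsrc (psi d)) = gsrc d.
Hypothesis Htgt : forall d, phi (gtgt (psi d)) = gtgt d.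
Hypothesis H0 : phi (gsrc b) = phi (gtgt b).
Hypothesis H1 : forall x y, phi x = phi y ->
  x = y \/ (x = gsrc b /\ y = gtgt b) \/ (x = gtgt b /\ y = gsrc b).
Hypothesis H2 : forall e, e <> b -> side (gsrc e) = side (gtgt e).
Hypothesis H3 : gsrc b <> gtgt b -> side (gsrc b) <> side (gtgt b).

Definition pk (e : gE g) : option (gE D) := [pick d | psi d == e].

Lemma pk_some e d : pk e = Some d -> psi d = e.
Proof. rewrite /pk; case: pickP => // d' /eqP H [<-] //. Qed.

Lemma pk_psi d : pk (psi d) = Some d.
Proof.
rewrite /pk; case: pickP => [d' /eqP H|H].
  by rewrite (Hpsi_inj H).
by move: (H d); rewrite eqxx.
Qed.

Lemma pk_none e : pk e = None -> e = b.
Proof.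
move=> Hn; case: (eqVneq e b) => // /eqP Heb.
have [d Hd] := Hpsi_sur Heb.
by move: Hn; rewrite -Hd pk_psi.
Qed.

Fixpoint proj (w : word (gE g)) : word (gE D) :=
  match w with
  | [::] => [::]
  | a :: w' => match pk a.1 with
               | Some d => (d, a.2) :: proj w'
               | None => proj w'
               end
  end.

Lemma proj_cat u v : proj (u ++ v) = proj u ++ proj v.
Proof. by elim: u => [|a u IH] //=; case: (pk a.1) => [d|] //=; rewrite IH. Qed.

Lemma proj_path s u t : is_path s u t -> is_path (phi s) (proj u) (phi t).
Proof.
elim: u s => [|[e bo] u IH] s /=; first by move=> ->.
case=> Hs Hp.
case Hk: (pk e) => [d|] /=.
  have Hd := pk_some Hk.
  split.
    by rewrite -Hs /lsrc /=; case: bo {Hs Hp} => /=; rewrite -Hd ?Hsrc ?Htgt.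
  have := IH _ Hp; congr is_path.
  by rewrite /ltgt /=; case: bo {Hs Hp} => /=; rewrite -Hd ?Hsrc ?Htgt.
have Hb := pk_none Hk; subst e.
have := IH _ Hp; congr is_path.
by rewrite -Hs /ltgt /lsrc /=; case: bo {Hs Hp} => /=.
Qed.

Lemma proj_in d bo u : List.In (d, bo) (proj u) -> List.In (psi d, bo) u.
Proof.
elim: u => [|[e bo'] u IH] //=.
case Hk: (pk e) => [d'|] /=; last by move/IH; right.
case=> [[<- <-]|/IH]; last by right.
by left; rewrite (pk_some Hk).
Qed.

Lemma wequiv_proj u v : wequiv U u v -> wequiv U (proj u) (proj v).
Proof.
move=> H G HG f.
pose f' := fun e => match pk e with Some d => f d | None => gone G end.
have E : forall w, geval f (proj w) = geval f' w.
  elim=> [|[e bo] w IH] //=.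
  rewrite /f' /=; case: (pk e) => [d|] /=; first by rewrite IH.
  by case: bo; rewrite ?ginv1 gmul1 IH.
by rewrite !E; apply: H.
Qed.

Definition parr (x : arrow g) : arrow D := (phi x.1.1, proj x.1.2, phi x.2).

Lemma proj_flatten fs :
  flatten (map (fun x => x.1.2) (map parr fs)) = proj (flatten (map (fun x => x.1.2) fs)).
Proof. by elim: fs => [|x fs IH] //=; rewrite proj_cat IH. Qed.

Lemma chain_proj s fs t : chain s fs t -> chain (phi s) (map parr fs) (phi t).
Proof.
elim: fs s => [|x fs IH] s /=; first by move=> ->.
case=> [Hx [Hp Hc]]; split; first by rewrite Hx.
split; first exact: proj_path.
exact: IH.
Qed.

Lemma fact_proj s w t fs : factorisation U s w t fs ->
  factorisation U (phi s) (proj w) (phi t) (map parr fs).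
Proof.
case=> [Hne [Hc Hw]]; split; first by case: fs Hne {Hc Hw}.
split; first exact: chain_proj.
rewrite proj_flatten; exact: wequiv_proj.
Qed.

Lemma in_map_parr y fs : List.In y (map parr fs) -> exists x, List.In x fs /\ y = parr x.
Proof.
elim: fs => [|x fs IH] //= [<-|/IH [z [Hz ->]]].
  by exists x; split; first left.
by exists z; split; first right.
Qed.


Lemma step_side (a : gE g * bool) : side (lsrc a) <> side (ltgt a) -> a.1 = b.
Proof.
case: a => e bo /=; rewrite /lsrc /ltgt /=.
case: (eqVneq e b) => [//|/eqP Heb]; have := H2 Heb.
by case: bo => /= ->.
Qed.

Lemma edge_side (T : gE g -> Prop) x y :
  (exists e, T e /\ ((gsrc e = x /\ gtgt e = y) \/ (gsrc e = y /\ gtgt e = x))) ->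
  side x <> side y -> T b /\ reach T x (gsrc b).
Proof.
move=> [e [Te Hxy]] Hs.
case: (eqVneq e b) => [Heb|/eqP Heb]; last first.
  have E := H2 Heb.
  by case: Hxy => [[E1 E2]|[E1 E2]]; rewrite E1 E2 in E; rewrite E in Hs.
subst e; split=> //.
case: Hxy => [[<- _]|[_ <-]]; first exact: rt_refl.
by apply: rt_step; exists b; split=> //; right.
Qed.

Lemma reach_side (T : gE g -> Prop) x y :
  reach T x y -> side x <> side y -> T b /\ reach T x (gsrc b).
Proof.
move/clos_rt_rt1n_iff; elim=> [z|x0 y0 z Hst Hr IH] Hs //.
case: (eqVneq (side x0) (side y0)) => [Heq|/eqP Hne].
  rewrite Heq in Hs; have [Tb Hrb] := IH Hs; split=> //.
  by apply: rt_trans Hrb; apply: rt_step.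
exact: edge_side Hst Hne.
Qed.

Lemma path_side s u t : is_path s u t -> side s <> side t -> exists bo, List.In (b, bo) u.
Proof.
elim: u s => [|a u IH] s /=; first by move=> -> .
case=> Hs Hp Hst.
case: (eqVneq (side (ltgt a)) (side s)) => [Heq|/eqP Hne].
  have Hc : side (ltgt a) <> side t by rewrite Heq.
  have [bo Hin] := IH _ Hp Hc.
  by exists bo; right.
have Hab : a.1 = b by apply: step_side; rewrite Hs; apply/nesym.
by exists a.2; left; rewrite -Hab; case: a {Hs Hp Hne Hab}.
Qed.

Lemma path_side_edge s u t e bo : is_path s u t -> List.In (e, bo) u ->
  side (gsrc e) <> side s -> exists bo, List.In (b, bo) u.
Proof.
elim: u s => [|a u IH] s //=.
case=> Hs Hp [Ha|Hin] Hse.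
  subst a; exists bo; left.
  suff -> : e = b by [].
  case: (eqVneq e b) => [//|/eqP Heb]; exfalso; apply: Hse.
  rewrite -Hs /lsrc /=; clear IH Hp; case: bo {Hs} => //=.
  by rewrite (H2 Heb).
case: (eqVneq (side (ltgt a)) (side s)) => [Heq|/eqP Hne].
  have Hc : side (gsrc e) <> side (ltgt a) by rewrite Heq.
  have [bo' Hin'] := IH _ Hp Hin Hc.
  by exists bo'; right.
have Hab : a.1 = b by apply: step_side; rewrite Hs; apply/nesym.
by exists a.2; left; rewrite -Hab; case: a {Hs Hp Hne Hab}.
Qed.

Lemma chain_cross s fs t : chain s fs t ->
  (side t <> side s \/ exists x, List.In x fs /\ side x.1.1 <> side s) ->
  exists x, List.In x fs /\ side x.1.1 <> side x.2.
Proof.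
elim: fs s => [|x fs IH] s /=.
  by move=> -> [//|[x [[] _]]].
case=> Hx [Hp Hc] Hcond.
case: (eqVneq (side x.2) (side s)) => [Heq|/eqP Hne]; last first.
  by exists x; split; [left | rewrite Hx; apply/nesym].
have [y [Hy Hyc]] : exists y, List.In y fs /\ side y.1.1 <> side y.2.
  apply: (IH _ Hc); rewrite Heq.
  case: Hcond => [H|[y [[<-|Hy] Hys]]]; [by left | by rewrite Hx in Hys | by right; exists y].
by exists y; split; first right.
Qed.

Lemma fiber (T : gE g -> Prop) q v : phi v = phi q -> (side v <> side q -> T b) -> reach T q v.
Proof.
move=> Hphi Hc.
case: (H1 Hphi) => [->|[[Ev Eq]|[Ev Eq]]]; first exact: rt_refl; subst v q.
- case: (eqVneq (gsrc b) (gtgt b)) => [->|/eqP Hne]; first exact: rt_refl.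
  apply: rt_step; exists b; split; last by right.
  by apply: Hc; exact: (H3 Hne).
- case: (eqVneq (gsrc b) (gtgt b)) => [->|/eqP Hne]; first exact: rt_refl.
  apply: rt_step; exists b; split; last by left.
  by apply: Hc; exact: (nesym (H3 Hne)).
Qed.

Lemma lift_reach (S : gE D -> Prop) (T : gE g -> Prop) s :
  (forall d, S d -> T (psi d)) ->
  (forall d, S d -> side (gsrc (psi d)) <> side s -> T b) ->
  forall y', reach S (phi s) y' -> forall v, phi v = y' ->
  (side v <> side s -> T b) -> reach T s v.
Proof.
move=> HST HS y' /clos_rt_rtn1_iff; elim=> [|y0 z Hst Hr IH] v Hv Hc.
  by apply: fiber.
case: Hst => [d [Sd Hd]].
have [p [q [Hp [Hq [Hpq Hsd]]]]] : exists p q, phi p = y0 /\ phi q = z /\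
    ((p = gsrc (psi d) /\ q = gtgt (psi d)) \/ (p = gtgt (psi d) /\ q = gsrc (psi d)))
    /\ side p = side (gsrc (psi d)).
  have E := H2 (@Hpsi_b d).
  case: Hd => [[Hs Ht]|[Hs Ht]].
    by exists (gsrc (psi d)), (gtgt (psi d)); rewrite Hsrc Htgt; split=> //; split=> //; split; first left.
  by exists (gtgt (psi d)), (gsrc (psi d)); rewrite Hsrc Htgt; split=> //; split=> //; split; [right|].
have Rp : reach T s p.
  apply: IH Hp _ => Hne; apply: (HS d Sd); by rewrite -Hsd.
have Rq : reach T s q.
  apply: rt_trans Rp _; apply: rt_step; exists (psi d); split; first exact: HST.
  by case: Hpq => [[-> ->]|[-> ->]]; [left|right].
have Hsq : side q = side p.
  have E := H2 (@Hpsi_b d).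
  by case: Hpq => [[-> ->]|[-> ->]].
apply: rt_trans Rq _; apply: fiber; first by rewrite Hv Hq.
move=> Hvq.
case: (eqVneq (side v) (side s)) => [Hvs|/eqP Hvs]; last exact: Hc.
apply: (HS d Sd); rewrite -Hsd -Hsq -Hvs; exact/nesym.
Qed.


Definition EC n := forall s u t d,
  (Cn U n (phi s) (proj u) (phi t)).2 d -> (Cn U n s u t).2 (psi d).
Definition GE n := forall (s : gV g) u t e,
  (Cn U n s u t).2 e -> side (gsrc e) <> side s -> (Cn U n s u t).2 b.
Definition GT n := forall (s : gV g) u t, side t <> side s -> (Cn U n s u t).2 b.
Definition RR n := forall (s : gV g) u t, is_path s u t -> (Pn U n s u t).1 t.

Lemma R_of n : propP D U -> EC n -> GE n -> GT n -> RR n.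
Proof.
move=> HD Hec Hge Hgt s u t Hp.
have [_ Hr] := HD _ _ _ (proj_path Hp) n.
split; first exact: start_in.
apply: (lift_reach (S := (Cn U n (phi s) (proj u) (phi t)).2)) Hr _ _ _ => //.
- move=> d Sd; exact: Hec.
- move=> d Sd Hne; exact: (Hge s u t (psi d) (Hec _ _ _ _ Sd) Hne).
- move=> Hne; exact: Hgt.
Qed.

Lemma EC0 : EC 0.
Proof.
move=> s u t d /= H u' Hp' Heq.
have [bo Hin] := H _ (proj_path Hp') (wequiv_proj Heq).
by exists bo; apply: proj_in.
Qed.

Lemma GE0 : GE 0.
Proof.
move=> s u t e /= H Hse u' Hp' Heq.
have [bo Hin] := H _ Hp' Heq.
exact: path_side_edge Hp' Hin Hse.
Qed.

Lemma GT0 : GT 0.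
Proof. move=> s u t Hst u' Hp' Heq; exact: path_side Hp' (nesym Hst). Qed.

Lemma ECS n : EC n -> GE n -> EC n.+1.
Proof.
move=> Hec Hge s u t d /= H fs Hf.
have [y [Hy Hcy]] := H _ (fact_proj Hf).
have [x [Hx Exy]] := in_map_parr Hy; subst y.
exists x; split => //.
case: Hcy => [Cd [_ Hr]].
split; first exact: Hec.
split; first exact: start_in.
apply: (lift_reach (S := (Cn U n (parr x).1.1 (parr x).1.2 (parr x).2).2) _ _ Hr (Hsrc d)).
- move=> d' Sd; exact: Hec.
- move=> d' Sd Hne; exact: (Hge _ _ _ (psi d') (Hec _ _ _ _ Sd) Hne).
- move=> Hne; exact: (Hge _ _ _ (psi d) (Hec _ _ _ _ Cd) Hne).
Qed.

Lemma cross_b n (HR : RR n) s fs t : chain s fs t ->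
  (side t <> side s \/ exists x, List.In x fs /\ side x.1.1 <> side s) ->
  exists x, List.In x fs /\ (component (Cn U n x.1.1 x.1.2 x.2) x.1.1).2 b.
Proof.
move=> Hc Hcond.
have [z [Hz Hzc]] := chain_cross Hc Hcond.
have [Cz Hrz] := HR _ _ _ (chain_path Hc Hz).
have [Tb Hrb] := reach_side Hrz Hzc.
by exists z.
Qed.

Lemma GES n : RR n -> GE n.+1.
Proof.
move=> HR s u t e /= H Hse fs Hf.
have [x [Hx [Ce [Cs Hr]]]] := H _ Hf.
case: (eqVneq (side x.1.1) (side (gsrc e))) => [Heq|/eqP Hne].
  case: Hf => [_ [Hc _]].
  apply: (cross_b HR Hc); right; exists x; split => //; by rewrite Heq.
have [Tb Hrb] := reach_side Hr Hne.
by exists x.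
Qed.

Lemma GTS n : RR n -> GT n.+1.
Proof.
move=> HR s u t Hst fs [_ [Hc _]].
by apply: (cross_b HR Hc); left.
Qed.

Lemma main_lift : propP D U -> propP g U.
Proof.
move=> HD i j w Hp n.
suff [Hec [Hge Hgt]] : EC n /\ GE n /\ GT n by exact: R_of.
elim: n => [|n [Hec [Hge Hgt]]]; first by split; [exact: EC0|split; [exact: GE0|exact: GT0]].
have HR := R_of HD Hec Hge Hgt.
split; first exact: ECS.
split; [exact: GES|exact: GTS].
Qed.

End Main.

Lemma connect_map (T T' : finType) (r : rel T) (r' : rel T') (f : T -> T') :
  (forall x y, r x y -> connect r' (f x) (f y)) ->
  forall x y, connect r x y -> connect r' (f x) (f y).
Proof.
move=> H x y /connectP [p]; elim: p x => [|z p IH] x /=.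
  by move=> _ ->; exact: connect0.
case/andP => rxz pz ly; exact: connect_trans (H _ _ rxz) (IH _ pz ly).
Qed.

Lemma minor_card (D g : graph) : is_minor D g -> #|gE D| <= #|gE g|.
Proof.
elim=> [g0|g0 g' D0 Hs _ IH]; first exact: leqnn.
apply: leq_trans IH _.
case: Hs => [[phi [psi [_ [Hb _]]]]|[[e [phi [psi [_ [Hi _]]]]]|[[v [phi [psi [_ [_ [_ [Hi _]]]]]]]|[[e [phi [psi [_ [Hb _]]]]]|[e [phi [psi [_ [_ [_ [Hi _]]]]]]]]]]].
- exact: leq_card (bij_inj Hb).
- exact: leq_card Hi.
- exact: leq_card Hi.
- exact: leq_card (bij_inj Hb).
- exact: leq_card Hi.
Qed.

Definition Ddel (g : graph) (b : gE g) : graph :=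
  @Graph (gV g) {e : gE g | e != b} (fun e => gsrc (val e)) (fun e => gtgt (val e)).

Lemma card_del (g : graph) (b : gE g) : #|gE (Ddel b)| < #|gE g|.
Proof.
rewrite /= card_sig.
have -> : #|[pred x | x != b]| = #|predC1 b| by apply: eq_card.
rewrite cardC1; case: #|gE g| (@card_gt0P _ (gE g)) => [|n] //=.
move=> H; have : 0 < 0 by apply/H; exists b.
by [].
Qed.

Lemma card_sigb (g : graph) (b : gE g) : #|{: {e : gE g | e != b}}| < #|gE g|.
Proof. exact: (card_del b). Qed.

Section Loop.
Variables (g : graph) (U : variety) (b : gE g).
Hypothesis Hb : gsrc b = gtgt b.

Lemma loop_lift : propP (Ddel b) U -> propP g U.
Proof.
apply: (@main_lift g (Ddel b) U b id val (fun _ => true)) => //.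
- exact: val_inj.
- by move=> d /eqP; rewrite (negbTE (valP d)).
- move=> e /eqP He; by exists (Sub e He).
- by move=> x y ->; left.
Qed.

Lemma del_minor : is_minor (Ddel b) g.
Proof.
apply: (@minor_step_trans g (Ddel b) (Ddel b)); last exact: minor_refl.
right; left; exists b, id, val; split; first by exists id.
split; first exact: val_inj.
split; first by move=> d /eqP; rewrite (negbTE (valP d)).
split; first by move=> e /eqP He; exists (Sub e He).
by [].
Qed.

Lemma del_conn : connected g -> connected (Ddel b).
Proof.
case=> Hc0 Hc; split=> // x y.
apply: (@connect_map (gV g) (gV (Ddel b)) _ _ id) (Hc x y) => x' y' /existsP [e /andP [_ He]].
case: (eqVneq e b) => [Heb|Heb].
  subst e; rewrite Hb in He.
  by case/orP: He => /andP [/eqP <- /eqP <-]; exact: connect0.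
apply: connect1; apply/existsP; exists (Sub e Heb); by [].
Qed.
End Loop.

Section Contract.
Variables (g : graph) (U : variety) (b : gE g).
Hypothesis Hne : gsrc b != gtgt b.

Definition VC := {v : gV g | v != gtgt b}.
Definition phic (x : gV g) : VC := insubd (exist _ (gsrc b) Hne : VC) x.

Definition Dcon : graph :=
  @Graph VC {e : gE g | e != b} (fun e => phic (gsrc (val e))) (fun e => phic (gtgt (val e))).

Lemma val_phic x : val (phic x) = if x == gtgt b then gsrc b else x.
Proof. by rewrite /phic val_insubd; case: (x == gtgt b). Qed.

Lemma phic_eq x y : phic x = phic y <->
  (x = y \/ (x = gsrc b /\ y = gtgt b) \/ (x = gtgt b /\ y = gsrc b)).
Proof.
split.
  move/(congr1 val); rewrite !val_phic.
  case: (eqVneq x (gtgt b)) => [->|Hx]; case: (eqVneq y (gtgt b)) => [->|Hy] //=.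
  - by left.
  - by move=> E; right; right; split.
  - by move=> E; right; left; split.
  - by left.
case=> [->|[[-> ->]|[-> ->]]] //; apply: val_inj; rewrite !val_phic eqxx (negbTE Hne) //.
Qed.

Lemma phic_sur (u : VC) : phic (val u) = u.
Proof. apply: val_inj; rewrite val_phic (negbTE (valP u)) //. Qed.

Lemma con_minor : is_minor Dcon g.
Proof.
apply: (@minor_step_trans g Dcon Dcon); last exact: minor_refl.
right; right; right; right; exists b, phic, val.
split; first exact/eqP.
split; first by move=> u; exists (val u); apply: phic_sur.
split; first exact: phic_eq.
split; first exact: val_inj.
split; first by move=> d /eqP; rewrite (negbTE (valP d)).
split; first by move=> e /eqP He; exists (Sub e He).
by [].
Qed.

Lemma con_conn : connected g -> connected Dcon.
Proof.
case=> Hc0 Hc; split.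
  by apply/card_gt0P; exists (phic (gsrc b)).
move=> x y; rewrite -(phic_sur x) -(phic_sur y).
apply: (@connect_map (gV g) (gV Dcon) _ _ phic) (Hc _ _) => x' y' /existsP [e /andP [_ He]].
case: (eqVneq e b) => [Heb|Heb].
  subst e.
  have -> : phic x' = phic y'.
    by apply/phic_eq; case/orP: He => /andP [/eqP <- /eqP <-]; right; [left|right].
  exact: connect0.
apply: connect1; apply/existsP; exists (Sub e Heb); rewrite /=.
by case/orP: He => /andP [/eqP <- /eqP <-]; rewrite !eqxx ?orbT.
Qed.

Variables (x0 y0 : gV g).
Hypothesis Hxy : ~~ connect (adj_in (predC1 b)) x0 y0.
Definition sidef (v : gV g) := connect (adj_in (predC1 b)) x0 v.

Lemma sidef_edge e : e <> b -> sidef (gsrc e) = sidef (gtgt e).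
Proof.
move=> /eqP Heb; rewrite /sidef.
have H1 : adj_in (predC1 b) (gsrc e) (gtgt e).
  by apply/existsP; exists e; rewrite /= Heb !eqxx.
have H2 : adj_in (predC1 b) (gtgt e) (gsrc e).
  by apply/existsP; exists e; rewrite /= Heb !eqxx orbT.
apply/idP/idP => H.
  exact: connect_trans H (connect1 H1).
exact: connect_trans H (connect1 H2).
Qed.

Lemma sidef_b : connected g -> sidef (gsrc b) <> sidef (gtgt b).
Proof.
case=> _ Hc Heq.
have Hstep : forall z z', adj_in predT z z' -> sidef z = sidef z'.
  move=> z z' /existsP [e /andP [_ He]].
  case: (eqVneq e b) => [Heb|/eqP Heb].
    by subst e; case/orP: He => /andP [/eqP <- /eqP <-]; rewrite Heq.
  by case/orP: He => /andP [/eqP <- /eqP <-]; rewrite (sidef_edge Heb).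
have : sidef x0 = sidef y0.
  move: (Hc x0 y0) => /connectP [p]; elim: p x0 => [|z p IH] x /=.
    by move=> _ ->.
  by case/andP => Hxz Hp Hl; rewrite (Hstep _ _ Hxz); apply: IH.
rewrite /sidef connect0 => E.
by move: Hxy; rewrite -E.
Qed.

Lemma con_lift : connected g -> propP Dcon U -> propP g U.
Proof.
move=> Hcg.
apply: (@main_lift g Dcon U b phic val sidef) => //.
- exact: val_inj.
- by move=> d /eqP; rewrite (negbTE (valP d)).
- move=> e /eqP He; by exists (Sub e He).
- by apply/phic_eq; right; left.
- by move=> x y /phic_eq.
- exact: sidef_edge.
- by move=> _; apply: sidef_b.
Qed.
End Contract.

Unset Implicit Arguments.

Theorem proposition3p3 (U : variety) (g : graph) :
  connected g ->
  ~ propP g U ->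
  (forall D : graph, connected D -> is_minor D g -> ~ propP D U -> is_minor g D) ->
  two_edge_connected g /\ loopless g.
Proof.
move=> Hc HnP Hmin.
have Hloop : loopless g.
  move=> b Hb.
  have HD : ~ propP (Ddel b) U by move=> HP; apply: HnP; apply: (loop_lift Hb HP).
  have := minor_card (Hmin _ (del_conn Hb Hc) (del_minor b) HD).
  by rewrite leqNgt (card_del b).
split=> //; split=> // b x0 y0.
case Hcn: (connect (adj_in (predC1 b)) x0 y0) => //; exfalso.
have Hne : gsrc b != gtgt b by apply/eqP; apply: Hloop.
have HD : ~ propP (Dcon Hne) U.
  move=> HP; apply: HnP; apply: (con_lift (x0 := x0) (y0 := y0)) HP => //.
  by rewrite Hcn.
have := minor_card (Hmin _ (con_conn Hne Hc) (con_minor Hne) HD).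
by rewrite leqNgt (card_sigb b).
Qed.
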